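(* Let $z_1,\ldots,z_N$ be distinct points on the unit circle in $\mathbb{C}$. Then there exists $p_0\in\{1,\ldots,N\}$ such that $$\prod_{q\ne p_0}|z_{p_0}-z_q|\le N.$$ *)

(* Defs.v *)
(* The complex plane is modelled by an arbitrary
   numClosedFieldType C (algebraically closed field with conjugation and norm,
   e.g. algC); the norm `|_| is the complex modulus. *)
From HB Require Import structures.
From mathcomp Require Import all_boot all_order all_algebra.
Set Implicit Arguments. Unset Strict Implicit. Unset Printing Implicit Defensive.

(* Main.v *)
Require Import Defs.
From HB Require Import structures.
From mathcomp Require Import all_boot all_order all_algebra.
Import Order.TTheory GRing.Theory Num.Theory.
Local Open Scope ring_scope.

Theorem mainTheorem8 (C : numClosedFieldType) (N : nat) (z : 'I_N -> C)
  (hN : (0 < N)%N) (hinj : injective z) (hunit : forall i, `|z i| = 1) :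
  exists p0 : 'I_N, \prod_(q < N | q != p0) `|z p0 - z q| <= N%:R.
Proof.
pose d p := \prod_(q < N | q != p) (z p - z q).
pose L p := \prod_(q < N | q != p) ('X - (z q)%:P).
have sL p : size (L p) = N.
  rewrite /L -big_filter size_prod_XsubC size_filter.
  have := cardC1 p; rewrite card_ord cardE /enum_mem size_filter => ->.
  by rewrite prednK.
have dn0 p : d p != 0.
  rewrite /d prodf_seq_neq0; apply/allP => q _; apply/implyP => qp.
  by rewrite subr_eq0; apply: contra qp => /eqP/hinj ->.
have Lev p j : (L p).[z j] = if p == j then d p else 0.
  rewrite /L horner_prod; case: eqP => [<-|/eqP pj].
    by apply: eq_bigr => q _; rewrite hornerXsubC.
  rewrite (bigD1 j) /=; last by rewrite eq_sym.
  by rewrite hornerXsubC subrr mul0r.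
pose g := \sum_(p < N) (z p ^+ N.-1 / d p) *: L p - 'X^(N.-1).
have g0 : g = 0.
  apply: (@roots_geq_poly_eq0 _ g [seq z i | i <- enum 'I_N]).
  - apply/allP => x /mapP [j _ ->]; rewrite /root /g hornerD hornerN hornerXn.
    rewrite horner_sum (bigD1 j) //= big1; last first.
      by move=> p /negbTE pj; rewrite hornerZ Lev pj mulr0.
    by rewrite hornerZ Lev eqxx addr0 divfK // subrr.
  - by rewrite map_inj_uniq ?enum_uniq.
  - rewrite size_map size_enum_ord /g.
    apply: (leq_trans (size_polyD _ _)); rewrite geq_max size_polyN size_polyXn prednK // leqnn andbT.
    apply: (leq_trans (size_sum _ _ _)); apply/bigmax_leqP => p _.
    by apply: (leq_trans (size_scale_leq _ _)); rewrite sL.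
have key : \sum_(p < N) z p ^+ N.-1 / d p = 1.
  have := congr1 (fun q : {poly C} => q`_N.-1) g0.
  rewrite /g coefB coef_sum coefXn eqxx coef0 => H.
  have E : \sum_(p < N) ((z p ^+ N.-1 / d p) *: L p)`_N.-1 = \sum_(p < N) z p ^+ N.-1 / d p.
    apply: eq_bigr => p _; rewrite coefZ.
    have := lead_coef_prod_XsubC (index_enum 'I_N) (fun q => q != p) z.
    by rewrite lead_coefE -/(L p) sL => ->; rewrite mulr1.
  rewrite E in H; apply/eqP; rewrite -subr_eq0; apply/eqP; exact: H.
have [p hp|hno] := pickP (fun p : 'I_N => \prod_(q < N | q != p) `|z p - z q| <= N%:R).
  by exists p.
exfalso.
have hd p : N%:R < `|d p|.
  rewrite real_ltNge ?realn ?normr_real // /d normr_prod; by have := hno p => /= ->.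
have : `|\sum_(p < N) z p ^+ N.-1 / d p| < 1.
  apply: le_lt_trans (ler_norm_sum _ _ _) _.
  have -> : 1 = \sum_(p < N) (N%:R^-1 : C).
    by rewrite sumr_const card_ord -[RHS]mulr_natr mulVf // pnatr_eq0 -lt0n.
  apply: ltr_sum.
    by apply/hasP; exists (Ordinal hN); rewrite ?mem_index_enum.
  move=> p _; rewrite normrM normrV ?unitfE ?dn0 // normrX hunit expr1n mul1r.
  rewrite ltf_pV2 ?hd // posrE ?ltr0n //.
  by apply: lt_trans (hd p); rewrite ltr0n.
by rewrite key normr1 ltxx.
Qed.
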